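(* Fix $T>0$, $r,\nu,\mu\in\mathbb R$, $\eta>0$, $\sigma>0$, $\rho\in(-1,1)$, $s_0>0$, $\lambda>0$, and let $\delta=\nu-\eta\rho\frac{\mu-r}{\sigma}$. For $\gamma\in(0,+\infty)$ define $\bar\theta(\gamma)=\lambda\gamma(1-\rho^2)$, $\bar w(\gamma)=W\left(s_0\eta^2Te^{(\delta-\frac{\eta^2}{2})T}\bar\theta(\gamma)\right)$ and $$\bar d(\gamma)=\frac{\lambda e^{-rT}}{\bar\theta(\gamma)\eta^2T}\left(\bar w(\gamma)+\frac{\bar w(\gamma)^2}{2}\right),$$ where $W$ is the Lambert function. Then $\bar d$ is $C^1$ and strictly decreasing on $(0,+\infty)$, $$\lim_{\gamma\to0^+}\bar d(\gamma)=\lambda e^{-rT}s_0e^{(\delta-\frac{\eta^2}{2})T},\qquad\lim_{\gamma\to+\infty}\bar d(\gamma)=0,$$ and $\bar d$ is bounded.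
   Context: The Lambert function $W$ is the inverse of the bijection $x\in(-1,+\infty)\mapsto xe^x\in(-1/e,+\infty)$. The quantity $\bar d(\gamma)$ is the deterministic lower approximation of the asking reservation price of $\lambda$ units of a non-traded stock for an agent with exponential utility of risk aversion $\gamma$. *)

(* Defs.v *)
From HB Require Import structures.
From mathcomp Require Import all_boot all_order all_algebra.
From mathcomp Require Import all_classical all_reals all_analysis.
Set Implicit Arguments. Unset Strict Implicit. Unset Printing Implicit Defensive.
Import Order.TTheory GRing.Theory Num.Theory.
Import numFieldNormedType.Exports.
Local Open Scope classical_set_scope.
Local Open Scope ring_scope.

(* For y > -1/e, lambertW y is the unique x > -1 with x e^x = y
   (outside that range the value is an unspecified junk value). *)
Definition lambertW (R : realType) (y : R) : R :=
  get [set x : R | -1 < x /\ x * expR x = y].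

Definition delta_par (R : realType) (r nu mu eta sigma rho : R) : R :=
  nu - eta * rho * ((mu - r) / sigma).

Definition theta_bar (R : realType) (lam rho gam : R) : R :=
  lam * gam * (1 - rho ^+ 2).

Definition w_bar (R : realType) (T r nu mu eta sigma rho s0 lam gam : R) : R :=
  lambertW (s0 * eta ^+ 2 * T
            * expR ((delta_par r nu mu eta sigma rho - eta ^+ 2 / 2) * T)
            * theta_bar lam rho gam).

Definition d_bar (R : realType) (T r nu mu eta sigma rho s0 lam gam : R) : R :=
  let w := w_bar T r nu mu eta sigma rho s0 lam gam in
  lam * expR (- r * T) / (theta_bar lam rho gam * eta ^+ 2 * T)
  * (w + w ^+ 2 / 2).

(* Main.v *)
Require Import Defs.
From HB Require Import structures.
From mathcomp Require Import all_boot all_order all_algebra.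
From mathcomp Require Import all_classical all_reals all_analysis.
From mathcomp Require Import ring lra.
Import Order.TTheory GRing.Theory Num.Theory.
Import numFieldNormedType.Exports.
Local Open Scope classical_set_scope.
Local Open Scope ring_scope.

Section LW.
Variable R : realType.
Implicit Types y w : R.

Lemma hpos_lt (v w : R) : 0 < v -> v < w -> v * expR v < w * expR w.
Proof.
move=> v0 H; apply: ltr_pM; [exact: ltW | exact: expR_ge0 | exact: H | by rewrite ltr_expR].
Qed.

Lemma hpos_inj (v w : R) : 0 < v -> 0 < w -> v * expR v = w * expR w -> v = w.
Proof.
move=> v0 w0 E; case: (ltgtP v w) => // H.
- by have := @hpos_lt v w v0 H; rewrite E ltxx.
- by have := @hpos_lt w v w0 H; rewrite E ltxx.
Qed.

Lemma W_spec y : 0 < y -> 0 < lambertW y /\ lambertW y * expR (lambertW y) = y.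
Proof.
move=> y0.
have ex : exists x : R, -1 < x /\ x * expR x = y.
  have cont : {within `[0, y], continuous (fun w : R => w * expR w)}.
    apply: continuous_subspaceT => x.
    exact: (continuousM (@cvg_id _ _) (@continuous_expR R x)).
  have [|c hcI hc] := @IVT R (fun w => w * expR w) 0 y y (ltW y0) cont.
    have h1 : y <= y * expR y by exact: ler_peMr (ltW y0) (ltW (pexpR_gt1 y0)).
    rewrite /= mul0r; apply/andP; split.
      by rewrite ge_min (ltW y0).
    by rewrite le_max h1 orbT.
  exists c; split => //.
  by move: hcI; rewrite in_itv /= => /andP[c0 _]; apply: lt_le_trans c0; rewrite ltrN10.
have [H1 H2] := getPex ex.
split; last exact: H2.
move: H2; set x := get _ => H2.
have : 0 < x * expR x by rewrite H2.
by rewrite pmulr_lgt0 // expR_gt0.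
Qed.

Lemma W_h w : 0 < w -> lambertW (w * expR w) = w.
Proof.
move=> w0; have hy : 0 < w * expR w by rewrite mulr_gt0 // expR_gt0.
have [p e] := @W_spec _ hy; exact: (hpos_inj _ _ p w0 e).
Qed.

Lemma W_incr y1 y2 : 0 < y1 -> y1 < y2 -> lambertW y1 < lambertW y2.
Proof.
move=> y10 y12; have y20 := lt_trans y10 y12.
have [p1 e1] := @W_spec y1 y10; have [p2 e2] := @W_spec y2 y20.
rewrite ltNge; apply/negP => H.
have : y2 <= y1.
  rewrite -e1 -e2; apply: ler_pM; [exact: ltW | exact: expR_ge0 | exact: H | by rewrite ler_expR].
by rewrite leNgt y12.
Qed.

Definition G (w : R) := (1 + w / 2) * expR (- w).

Lemma G_decr p q : 0 <= p -> p < q -> G q < G p.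
Proof.
move=> p0 pq; rewrite /G.
have e := expR_ge1Dx (q - p).
have ep : expR (- q) = expR (- p) * expR (- (q - p)) by rewrite -expRD; congr expR; ring.
rewrite ep mulrCA mulrC ltr_pM2r ?expR_gt0 //.
rewrite expRN mulrC ltr_pdivrMl ?expR_gt0 //.
have : (0 < expR (q - p)) := expR_gt0 _.
nra.
Qed.

Lemma G0 : G 0 = 1.
Proof. by rewrite /G mul0r addr0 oppr0 expR0 mulr1. Qed.

Lemma G_gt0 w : 0 <= w -> 0 < G w.
Proof. move=> w0; rewrite /G mulr_gt0 ?expR_gt0 //; nra. Qed.

Lemma G_lower w : 0 <= w -> 1 - w <= G w.
Proof.
move=> w0; rewrite /G; have e := expR_ge1Dx (- w).
have e0 := expR_gt0 (- w).
nra.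
Qed.

Lemma G_upper w : 0 <= w -> G w <= (1 + w / 2)^-1.
Proof.
move=> w0; rewrite /G.
have e := expR_ge1Dx (w / 2).
have E : expR w = expR (w / 2) ^+ 2 by rewrite -expRM_natl; congr expR; field.
have p : 0 < 1 + w / 2 by nra.
rewrite expRN E ler_pdivrMr ?exprn_gt0 ?expR_gt0 //.
rewrite [X in _ <= X]mulrC ler_pdivlMr // -expr2 lerXn2r ?nnegrE ?(ltW p) ?expR_ge0 //.
Qed.

Lemma h_der (x : R) : is_derive x 1 (fun w : R => w * expR w) (expR x * (1 + x)).
Proof.
have H : is_derive x (1:R) ((@id R) * expR) (x *: expR x + expR x *: 1) by apply: is_deriveM.
apply: (@is_derive_eq _ _ _ (fun w => w * expR w) x 1 _ (x *: expR x + expR x *: 1) H).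
rewrite /GRing.scale /=; ring.
Qed.

Lemma W_near (x : R) : 0 < x -> {near x, cancel (fun w : R => w * expR w) (@lambertW R)}.
Proof.
move=> x0; near=> w; apply: W_h; near: w; exact: lt_nbhsr.
Unshelve. all: by end_near. Qed.

Lemma h_cont : continuous (fun w : R => w * expR w).
Proof. move=> x; exact: (continuousM (@cvg_id _ _) (@continuous_expR R x)). Qed.

Lemma W_cont y : 0 < y -> {for y, continuous (@lambertW R)}.
Proof.
move=> y0; have [p e] := @W_spec y y0.
have hc : {near lambertW y, continuous (fun w : R => w * expR w)}.
  by near=> w; exact: h_cont.
have := near_can_continuous (W_near _ p) hc.
by rewrite e => /nbhs_singleton.
Unshelve. all: by end_near. Qed.

Lemma W_der y : 0 < y ->
  is_derive y 1 (@lambertW R) (expR (lambertW y) * (1 + lambertW y))^-1.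
Proof.
move=> y0; have [p e] := @W_spec y y0.
have hc : {near lambertW y, continuous (fun w : R => w * expR w)}.
  by near=> w; exact: h_cont.
have := is_derive_inverse (W_near _ p) hc (h_der _) _.
rewrite e; apply.
by rewrite mulf_neq0 // ?expR_eq0 // gt_eqF // ltr_wpDr // ltW.
Unshelve. all: by end_near. Qed.
Lemma G_der (w : R) : is_derive w 1 G (- (1 + w) / 2 * expR (- w)).
Proof.
rewrite /G; apply: is_derive_eq.
by rewrite /GRing.scale /=; field.
Qed.
Lemma is_derive1_comp (f g : R -> R) (x df dg : R) :
  is_derive x 1 f df -> is_derive (f x) 1 g dg -> is_derive x 1 (g \o f) (dg * df).
Proof.
move=> [fd fv] [gd gv].
have d : derivable (g \o f) x 1.
  by apply/derivable1_diffP; apply: differentiable_comp; apply/derivable1_diffP.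
apply: DeriveDef => //; rewrite -derive1E derive1_comp // !derive1E fv gv //=.
Qed.
Lemma lin_der (a x : R) : is_derive x 1 (fun g : R => a * g) a.
Proof. apply: is_derive_eq.  by rewrite /GRing.scale /=; ring. Qed.
End LW.
Arguments G {R}.


Theorem proposition3 (R : realType) (T r nu mu eta sigma rho s0 lam : R)
  (hT : 0 < T) (heta : 0 < eta) (hsigma : 0 < sigma)
  (hrho : -1 < rho < 1) (hs0 : 0 < s0) (hlam : 0 < lam) :
  let d := d_bar T r nu mu eta sigma rho s0 lam in
  let delta := delta_par r nu mu eta sigma rho in
  (* d is C^1 on (0, +oo) *)
  {in `]0, +oo[, forall g, derivable d g 1} /\
  {in `]0, +oo[, continuous (derive1 d)} /\
  (* d is strictly decreasing on (0, +oo) *)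
  {in `]0, +oo[ &, forall g1 g2, g1 < g2 -> d g2 < d g1} /\
  (* limits at 0+ and +oo *)
  d g @[g --> 0^'+] --> lam * expR (- r * T) * s0 * expR ((delta - eta ^+ 2 / 2) * T) /\
  d g @[g --> +oo] --> 0 /\
  (* d is bounded on (0, +oo) *)
  (exists M : R, forall g, 0 < g -> `|d g| <= M).
Proof.
move=> d delta.
set E := expR ((delta - eta ^+ 2 / 2) * T).
have E0 : 0 < E by rewrite expR_gt0.
have c0 : 0 < 1 - rho ^+ 2.
  move/andP: hrho => [h1 h2]; rewrite subr_gt0 expr2; nra.
set a := s0 * eta ^+ 2 * T * E * (lam * (1 - rho ^+ 2)).
set A := lam * expR (- r * T) * s0 * E.
have a0 : 0 < a by rewrite /a !mulr_gt0 // exprn_gt0.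
have A0 : 0 < A by rewrite /A !mulr_gt0 // expR_gt0.
pose F g := A * G (lambertW (a * g)).
have dF : forall g, 0 < g -> d g = F g.
  move=> g g0; rewrite /d /d_bar /w_bar /F.
  have -> : s0 * eta ^+ 2 * T * expR ((delta_par r nu mu eta sigma rho - eta ^+ 2 / 2) * T) *
      theta_bar lam rho g = a * g by rewrite /a /theta_bar /E /delta; ring.
  have ag0 : 0 < a * g by rewrite mulr_gt0.
  have [p e] := @W_spec R _ ag0.
  set w := lambertW (a * g) in p e *.
  have th : theta_bar lam rho g * eta ^+ 2 * T = w * expR w / (s0 * E).
    rewrite e /a /theta_bar; field; apply/andP; split; exact: lt0r_neq0.
  rewrite th /G /A expRN; field.
  rewrite !lt0r_neq0 ?expR_gt0 //.
pose Dv x := - (A * a / 2) * (expR (- lambertW (a * x)) * expR (- lambertW (a * x))).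
have Fder : forall g : R, 0 < g -> is_derive g 1 F (Dv g).
  move=> g g0; have ag0 : 0 < a * g by rewrite mulr_gt0.
  have H1 := @is_derive1_comp R _ _ _ _ _ (@lin_der R a g) (@W_der R _ ag0).
  have H2 := @is_derive1_comp R _ _ _ _ _ H1 (@G_der R _).
  have H3 := @is_derive1_comp R _ _ _ _ _ H2 (@lin_der R A _).
  apply: (@is_derive_eq _ _ _ F g 1 _ _ H3).
  have [p e] := @W_spec R _ ag0.
  rewrite /Dv /=; set w := lambertW (a * g) in p e *.
  rewrite expRN; field.
  by rewrite !lt0r_neq0 ?expR_gt0 // ltr_wpDr // ltW.
have nearF : forall g : R, 0 < g -> \forall x \near g, d x = F x.
  move=> g g0; near=> x; apply: dF; near: x; exact: lt_nbhsr.
split.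
  move=> g; rewrite in_itv /= andbT => g0.
  apply: (@near_eq_derivable _ _ _ F d); last by case: (Fder g g0).
  by near=> x; apply/esym; near: x; apply: nearF.
split.
  move=> g; rewrite in_itv /= andbT => g0.
  have eq : {near g, Dv =1 derive1 d}.
    near=> x; have x0 : 0 < x by near: x; exact: lt_nbhsr.
    rewrite derive1E (near_eq_derive _ (nearF x x0)).
    by case: (Fder x x0).
  rewrite /continuous_at.
  rewrite -(nbhs_singleton eq); apply: cvg_trans (near_eq_cvg eq) _.
  have ag0 : 0 < a * g by rewrite mulr_gt0.
  have Wc : (fun x => lambertW (a * x)) x @[x --> g] --> lambertW (a * g).
    apply: continuous_comp; last exact: (@W_cont R _ ag0).
    by apply: cvgM; [exact: cvg_cst | exact: cvg_id].
  have Ec : (fun x => expR (- lambertW (a * x))) x @[x --> g] --> expR (- lambertW (a * g)).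
    apply: continuous_comp; last exact: continuous_expR.
    exact: cvgN Wc.
  apply: cvgM; first exact: cvg_cst.
  exact: (cvgM Ec Ec).
have Wpos : forall g : R, 0 < g -> 0 < lambertW (a * g).
  by move=> g g0; have [] := @W_spec R (a * g) (mulr_gt0 a0 g0).
have Gle1 : forall g : R, 0 < g -> G (lambertW (a * g)) < 1.
  by move=> g g0; rewrite -(G0 R); apply: G_decr => //; exact: Wpos.
have Wh : forall w : R, 0 < w -> lambertW (a * (w * expR w / a)) = w.
  move=> w w0; rewrite mulrCA divff ?mulr1 ?lt0r_neq0 //; exact: W_h.
have hdiv0 : forall w : R, 0 < w -> 0 < w * expR w / a.
  by move=> w w0; rewrite !mulr_gt0 ?invr_gt0 ?expR_gt0.
have dec : forall g1 g2 : R, 0 < g1 -> g1 < g2 -> d g2 < d g1.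
  move=> g1 g2 g10 g12; have g20 := lt_trans g10 g12.
  rewrite !dF // /F ltr_pM2l //; apply: G_decr; first exact/ltW/Wpos.
  by apply: W_incr; rewrite ?mulr_gt0 // ltr_pM2l.
split.
  move=> g1 g2; rewrite !in_itv /= !andbT => g10 g20; exact: dec.
split.
  apply/cvgrPdist_lt => eps eps0.
  set w0 := eps / (2 * A).
  have w00 : 0 < w0 by rewrite /w0 divr_gt0 // mulr_gt0.
  set g0 := w0 * expR w0 / a.
  have g00 : 0 < g0 by exact: hdiv0.
  near=> g.
  have gp : 0 < g by near: g; exact: nbhs_right_gt.
  have gl : g < g0 by near: g; exact: nbhs_right_lt.
  have h2 : d g0 < d g by exact: dec.
  move: h2; rewrite !dF // /F /g0 Wh // => h2.
  have h3 := @G_lower R w0 (ltW w00).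
  have h1 := Gle1 g gp.
  have Aw : A * w0 = eps / 2 by rewrite /w0; field; exact: lt0r_neq0.
  rewrite -/A ger0_norm; last by rewrite subr_ge0 ler_piMr // ltW.
  nra.
split.
  apply/cvgrPdist_lt => eps eps0.
  set w1 := 2 * A / eps.
  have w10 : 0 < w1 by rewrite /w1 divr_gt0 // mulr_gt0.
  set g1 := w1 * expR w1 / a.
  have g10 : 0 < g1 by exact: hdiv0.
  near=> g.
  have gl : g1 < g by near: g; apply: nbhs_pinfty_gt; exact: num_real.
  have gp := lt_trans g10 gl.
  have h2 : d g < d g1 by exact: dec.
  move: h2; rewrite !dF // /F /g1 Wh // => h2.
  have h3 := @G_upper R w1 (ltW w10).
  have h4 : 0 < G (lambertW (a * g)) by apply: G_gt0; exact/ltW/Wpos.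
  rewrite sub0r normrN ger0_norm; last by rewrite mulr_ge0 // ltW.
  apply: (lt_le_trans h2).
  have ee : (1 + w1 / 2)^-1 = eps / (eps + A).
    rewrite /w1; field; apply/andP; split; rewrite lt0r_neq0 //; exact: addr_gt0.
  rewrite ee in h3.
  have h5 : A * G w1 <= A * (eps / (eps + A)) by rewrite ler_pM2l.
  apply: (le_trans h5).
  rewrite mulrA ler_pdivrMr ?addr_gt0 //; nra.
exists A => g g0; rewrite dF // /F ger0_norm.
  by apply: ler_piMr; [exact: ltW | exact/ltW/Gle1].
by rewrite mulr_ge0 ?ltW // G_gt0 // ltW // Wpos.
Unshelve. all: by end_near.
Qed.
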